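(* Let $m$ be a positive integer and let $A,B$ be finite multisets of elements of $\{1,\dots,m\}$. If $\sum A\ge m^2$ and $\sum B\ge m^2$, then the pair $(A,B)$ is reducible, i.e., there exist a nonempty sub-multiset $A'\subseteq A$ and a nonempty sub-multiset $B'\subseteq B$ with $\sum A'=\sum B'$.
   Context: For a multiset $A$, $\sum A$ denotes the sum of its elements (counted with multiplicity). A pair of multisets $(A,B)$ is called reducible if the sum of some nonempty sub-multiset of $A$ equals the sum of some nonempty sub-multiset of $B$, and irreducible otherwise. *)

(* Defs.v *)
From mathcomp Require Import all_boot.
Set Implicit Arguments. Unset Strict Implicit. Unset Printing Implicit Defensive.

(* Finite multisets of naturals are represented by sequences (order irrelevant). *)
Definition submset (A' A : seq nat) : Prop :=
  forall x : nat, count_mem x A' <= count_mem x A.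

Definition reducible (A B : seq nat) : Prop :=
  exists A' B' : seq nat,
    [/\ submset A' A, submset B' B, A' != [::], B' != [::] & sumn A' = sumn B'].

(* Main.v *)
Require Import Defs.
From mathcomp Require Import all_boot.
From mathcomp Require Import zify.
Set Implicit Arguments. Unset Strict Implicit.

Definition ps (s : seq nat) i := sumn (take i s).

Lemma sumn_le (m : nat) (s : seq nat) :
  all (fun a => 1 <= a <= m) s -> sumn s <= size s * m.
Proof.
elim: s => //= a s IH /andP [/andP [_ H] /IH]; lia.
Qed.

Lemma sumn_pos (m : nat) (s : seq nat) :
  all (fun a => 1 <= a <= m) s -> s != [::] -> 0 < sumn s.
Proof.
case: s => //= a s /andP [/andP [H _] _] _; lia.
Qed.

Lemma ps_le (m : nat) (s : seq nat) i :
  all (fun a => 1 <= a <= m) s -> ps s i <= i * m.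
Proof.
move=> H; rewrite /ps.
have H1 : all (fun a => 1 <= a <= m) (take i s).
  by apply/allP => x /mem_take Hx; apply: (allP H).
have L1 := sumn_le H1.
have L2 : size (take i s) <= i by rewrite size_take; case: ltnP => // /ltnW.
have L3 := leq_mul L2 (leqnn m).
exact: leq_trans L1 L3.
Qed.

Lemma ps_S (m : nat) (s : seq nat) i :
  all (fun a => 1 <= a <= m) s -> i < size s ->
  exists a, [/\ 1 <= a, a <= m & ps s i.+1 = ps s i + a].
Proof.
move=> H Hi; exists (nth 0 s i).
have /andP [H1 H2] := allP H _ (mem_nth 0 Hi).
by split => //; rewrite /ps (take_nth 0 Hi) sumn_rcons.
Qed.

Lemma seg_props (s : seq nat) i1 i2 :
  i1 <= i2 ->
  submset (drop i1 (take i2 s)) s /\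
  ps s i2 = ps s i1 + sumn (drop i1 (take i2 s)).
Proof.
move=> Hi; split.
  move=> x.
  have E1 := cat_take_drop i2 s.
  have E2 := cat_take_drop i1 (take i2 s).
  have C1 : count_mem x s = count_mem x (take i2 s) + count_mem x (drop i2 s)
    by rewrite -count_cat E1.
  have C2 : count_mem x (take i2 s) = count_mem x (take i1 (take i2 s))
       + count_mem x (drop i1 (take i2 s)) by rewrite -count_cat E2.
  lia.
rewrite /ps -{1}(cat_take_drop i1 (take i2 s)) sumn_cat take_takel //.
Qed.

Lemma lemma1 (m : nat) (A B : seq nat) :
  0 < m ->
  all (fun a => 1 <= a <= m) A ->
  all (fun b => 1 <= b <= m) B ->
  m ^ 2 <= sumn A ->
  m ^ 2 <= sumn B ->
  reducible A B.
Proof.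
move=> m0 HA HB SA SB.
pose step (p : nat * nat) :=
  if ps A p.1 <= ps B p.2 then (p.1.+1, p.2) else (p.1, p.2.+1).
pose st n := iter n step (0, 0).
have kA : m <= size A.
  have L := sumn_le HA; move: SA; rewrite expnS expn1 => S.
  have : m * m <= size A * m by lia.
  by rewrite leq_pmul2r.
have kB : m <= size B.
  have L := sumn_le HB; move: SB; rewrite expnS expn1 => S.
  have : m * m <= size B * m by lia.
  by rewrite leq_pmul2r.
have psA := take_size A; have psB := take_size B.
have inv : forall n, n <= 2 * m ->
  [/\ (st n).1 + (st n).2 = n, (st n).1 <= size A, (st n).2 <= size B,
      ps B (st n).2 < ps A (st n).1 + m & ps A (st n).1 <= ps B (st n).2 + m].
  elim=> [|n IH] Hn.
    by rewrite /st /= /ps !take0 /=; split => //; lia.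
  have [E1 E2 E3 E4 E5] := IH (ltnW Hn).
  rewrite /st iterS -/(st n) /step.
  move: E1 E2 E3 E4 E5; case: (st n) => i j /= E1 E2 E3 E4 E5.
  case: ifP => Hle /=.
    have Hi : i < size A.
      rewrite ltn_neqAle E2 andbT; apply/negP => /eqP Ei.
      have := ps_le j HB.
      move: Hle SA; rewrite Ei /ps psA expnS expn1 => Hle SA Hj.
      have : m * m <= j * m by lia.
      rewrite leq_pmul2r //; lia.
    have [a [a1 a2 ->]] := ps_S HA Hi.
    split; lia.
  have Hj : j < size B.
    rewrite ltn_neqAle E3 andbT; apply/negP => /eqP Ej.
    have := ps_le i HA.
    move: Hle SB; rewrite Ej /ps psB expnS expn1 => Hle SB Hi.
    have : m * m < i * m by lia.
    rewrite ltn_pmul2r //; lia.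
  have [b [b1 b2 ->]] := ps_S HB Hj.
  split; lia.
have mono : forall n k, (st n).1 <= (st (n + k)).1 /\ (st n).2 <= (st (n + k)).2.
  move=> n; elim=> [|k [IH1 IH2]]; first by rewrite addn0.
  rewrite addnS /st iterS -/(st (n + k)) /step.
  by case: ifP => _ /=; split => //; apply: leq_trans (leqnSn _).
pose d n := ps A (st n).1 + m.-1 - ps B (st n).2.
pose s := map d (iota 0 (2 * m).+1).
have nu : ~~ uniq s.
  apply/negP => U.
  have Hs : {subset s <= iota 0 (2 * m)}.
    move=> x /mapP [n].
    rewrite mem_iota add0n => Hn ->.
    have [_ _ _ E4 E5] := inv n Hn.
    rewrite mem_iota add0n /d; lia.
  have := uniq_leq_size U Hs.
  by rewrite size_map !size_iota ltnn.
have [n1 [n2 [H12 H2 Heq]]] := uniqPn 0 nu.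
rewrite size_map size_iota in H2.
rewrite !(nth_map 0) ?size_iota ?(ltn_trans H12) // !nth_iota ?(ltn_trans H12) //
  !add0n in Heq.
have [F1 F2 F3 F4 F5] := inv n1 (leq_trans (ltnW H12) H2).
have [G1 G2 G3 G4 G5] := inv n2 H2.
have [M1 M2] := mono n1 (n2 - n1); rewrite subnKC ?(ltnW H12) // in M1 M2.
move: F1 F2 F3 F4 F5 G1 G2 G3 G4 G5 M1 M2 Heq; rewrite /d.
case: (st n1) => i1 j1; case: (st n2) => i2 j2 /=.
move=> F1 F2 F3 F4 F5 G1 G2 G3 G4 G5 M1 M2 Heq.
have [SubA EA] := seg_props A M1.
have [SubB EB] := seg_props B M2.
have posA : drop i1 (take i2 A) != [::] -> 0 < sumn (drop i1 (take i2 A)).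
  apply: sumn_pos; apply/allP => x /mem_drop /mem_take; exact: (allP HA).
have posB : drop j1 (take j2 B) != [::] -> 0 < sumn (drop j1 (take j2 B)).
  apply: sumn_pos; apply/allP => x /mem_drop /mem_take; exact: (allP HB).
have szA : size (drop i1 (take i2 A)) = i2 - i1 by rewrite size_drop size_takel.
have szB : size (drop j1 (take j2 B)) = j2 - j1 by rewrite size_drop size_takel.
have Esum : sumn (drop i1 (take i2 A)) = sumn (drop j1 (take j2 B)) by lia.
have nA : drop i1 (take i2 A) != [::].
  rewrite -size_eq0 szA; apply/negP => /eqP Z.
  have nB : drop j1 (take j2 B) != [::] by rewrite -size_eq0 szB; lia.
  have := posB nB; rewrite -Esum.
  by have -> : drop i1 (take i2 A) = [::] by apply/eqP; rewrite -size_eq0 szA Z.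
have nB : drop j1 (take j2 B) != [::].
  apply/negP => /eqP Z.
  have := posA nA; rewrite Esum Z //.
by exists (drop i1 (take i2 A)), (drop j1 (take j2 B)); split.
Qed.
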